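(* Let $A\in\mathbb{R}^{n\times n}$ and $C\in\mathbb{R}^{m\times n}$. Define subspaces of $\mathbb{R}^n$ by $S_0:=\mathcal{N}(C)$ (the null space of $C$) and $S_k:=AS_{k-1}\cap S_0$ for $k=1,2,\ldots$, where $AS:=\{As: s\in S\}$. Then the linear system $x^+=Ax$, $y=Cx$ (with state space $\mathbb{R}^n$ and output space $\mathbb{R}^m$) is deadbeat observable if and only if $S_n=\{0\}$.
   Context: Consider a discrete-time system $x^+=f(x)$, $y=h(x)$ with $x\in\mathcal{X}\subset\mathbb{R}^n$, $y\in\mathcal{Y}\subset\mathbb{R}^m$; its solution from $x$ is $\phi(k,x)$, with $\phi(0,x)=x$, $\phi(k+1,x)=f(\phi(k,x))$. Given a set-valued map $g:\mathcal{X}\times\mathcal{Y}\rightrightarrows\mathcal{X}$, consider the cascade $x^+=f(x)$, $\hat x^+\in g(\hat x,h(x))$; a solution of the second component is any sequence $\psi(k,\hat x,x)$ with $\psi(0,\hat x,x)=\hat x$ and $\psi(k+1,\hat x,x)\in g(\psi(k,\hat x,x),h(\phi(k,x)))$ for all $k$. The system $\hat x^+\in g(\hat x,y)$ is a deadbeat observer for $x^+=f(x),\,y=h(x)$ if there exists an integer $p\ge1$ such that all such solutions satisfy $\psi(k,\hat x,x)=\phi(k,x)$ for all $x,\hat x\in\mathcal{X}$ and all $k\ge p$. The system is deadbeat observable if a deadbeat observer for it exists. *)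

(* Defs.v *)
From HB Require Import structures.
From mathcomp Require Import all_boot all_order all_algebra.
Set Implicit Arguments. Unset Strict Implicit. Unset Printing Implicit Defensive.
Import Order.TTheory GRing.Theory Num.Theory.
Local Open Scope ring_scope.

Fixpoint sol (X : Type) (f : X -> X) (k : nat) (x : X) : X :=
  match k with
  | O => x
  | S k' => f (sol f k' x)
  end.

(* A set-valued map g : X x Y => X is represented as X -> Y -> (X -> Prop);
   g xh y z means z \in g(xh, y).
   psi is a solution of xh^+ \in g(xh, h x) driven by x, from xh. *)
Definition is_obs_solution (X Y : Type) (f : X -> X) (h : X -> Y)
  (g : X -> Y -> X -> Prop) (xh x : X) (psi : nat -> X) : Prop :=
  psi 0%N = xh /\ forall k : nat, g (psi k) (h (sol f k x)) (psi k.+1).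

Definition deadbeat_observer (X Y : Type) (f : X -> X) (h : X -> Y)
  (g : X -> Y -> X -> Prop) : Prop :=
  exists p : nat, (1 <= p)%N /\
    forall (x xh : X) (psi : nat -> X), is_obs_solution f h g xh x psi ->
      forall k : nat, (p <= k)%N -> psi k = sol f k x.

(* Set-valued maps are required to have nonempty values. *)
Definition deadbeat_observable (X Y : Type) (f : X -> X) (h : X -> Y) : Prop :=
  exists g : X -> Y -> X -> Prop,
    (forall (xh : X) (y : Y), exists z, g xh y z) /\ deadbeat_observer f h g.

Fixpoint Sk (R : realFieldType) (n m : nat) (A : 'M[R]_n) (C : 'M[R]_(m, n))
  (k : nat) : 'cV[R]_n -> Prop :=
  match k with
  | O => fun x => C *m x = 0
  | S k' => fun x => (exists s, Sk A C k' s /\ x = A *m s) /\ C *m x = 0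
  end.

(* Main.v *)
Require Import Defs.
From HB Require Import structures.
From mathcomp Require Import all_boot all_order all_algebra.
From Stdlib Require Import Classical ClassicalEpsilon.
Import Order.TTheory GRing.Theory Num.Theory.
Local Open Scope ring_scope.
Set Implicit Arguments.

Lemma Sk_mono (R : realFieldType) (n m : nat) (A : 'M[R]_n) (C : 'M[R]_(m, n)) k x :
  Sk A C k.+1 x -> Sk A C k x.
Proof.
elim: k x => [|k IH] x /=; first by case.
by case=> [[s [Hs ->]] HC]; split=> //; exists s; split=> //; apply: IH.
Qed.

Lemma Sk_add (R : realFieldType) (n m : nat) (A : 'M[R]_n) (C : 'M[R]_(m, n)) k x y :
  Sk A C k x -> Sk A C k y -> Sk A C k (x + y).
Proof.
elim: k x y => [|k IH] x y /=; first by move=> Hx Hy; rewrite mulmxDr Hx Hy addr0.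
case=> [[s [Hs ->]] HC] [[t [Ht ->]] HC']; split.
  by exists (s + t); split; [apply: IH|rewrite mulmxDr].
by rewrite mulmxDr HC HC' addr0.
Qed.

Lemma Sk_opp (R : realFieldType) (n m : nat) (A : 'M[R]_n) (C : 'M[R]_(m, n)) k x :
  Sk A C k x -> Sk A C k (- x).
Proof.
elim: k x => [|k IH] x /=; first by move=> Hx; rewrite mulmxN Hx oppr0.
case=> [[s [Hs ->]] HC]; split.
  by exists (- s); split; [apply: IH|rewrite mulmxN].
by rewrite mulmxN HC oppr0.
Qed.

Lemma Sk_0 (R : realFieldType) (n m : nat) (A : 'M[R]_n) (C : 'M[R]_(m, n)) k :
  Sk A C k 0.
Proof.
elim: k => [|k IH] /=; first by rewrite mulmx0.
by split; [exists 0; split; [|rewrite mulmx0]|rewrite mulmx0].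
Qed.

Definition Tk (R : realFieldType) (n m : nat) (A : 'M[R]_n) (C : 'M[R]_(m, n)) j (v : 'cV[R]_n) : Prop :=
  match j with 0%N => True | j'.+1 => exists s, Sk A C j' s /\ v = A *m s end.
Arguments Tk {R n m}.

Lemma Tk_mono (R : realFieldType) (n m : nat) (A : 'M[R]_n) (C : 'M[R]_(m, n)) i j v :
  (i <= j)%N -> Tk A C j v -> Tk A C i v.
Proof.
elim: j => [|j IH]; first by rewrite leqn0 => /eqP ->.
rewrite leq_eqVlt => /orP [/eqP -> //|]; rewrite ltnS => Hij HT.
apply: IH => //; move: HT; case: j {Hij} => [//|j] /= [s [Hs ->]].
by exists s; split=> //; apply: Sk_mono.
Qed.

Lemma Tk_0 (R : realFieldType) (n m : nat) (A : 'M[R]_n) (C : 'M[R]_(m, n)) j :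
  Tk A C j 0.
Proof. by case: j => [//|j] /=; exists 0; rewrite mulmx0; split=> //; apply: Sk_0. Qed.

Lemma Tk_add (R : realFieldType) (n m : nat) (A : 'M[R]_n) (C : 'M[R]_(m, n)) j x y :
  Tk A C j x -> Tk A C j y -> Tk A C j (x + y).
Proof.
case: j => [//|j] /= [s [Hs ->]] [t [Ht ->]].
by exists (s + t); split; [apply: Sk_add|rewrite mulmxDr].
Qed.

Lemma Tk_opp (R : realFieldType) (n m : nat) (A : 'M[R]_n) (C : 'M[R]_(m, n)) j x :
  Tk A C j x -> Tk A C j (- x).
Proof.
case: j => [//|j] /= [s [Hs ->]].
by exists (- s); split; [apply: Sk_opp|rewrite mulmxN].
Qed.

Lemma Tk_Sk (R : realFieldType) (n m : nat) (A : 'M[R]_n) (C : 'M[R]_(m, n)) j x :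
  Tk A C j x -> C *m x = 0 -> Sk A C j x.
Proof. by case: j => [//|j] /= H1 H2; split. Qed.

Lemma max_ex (Q : nat -> Prop) N k : (k <= N)%N -> Q k ->
  exists J, (J <= N)%N /\ Q J /\ forall j, (j <= N)%N -> Q j -> (j <= J)%N.
Proof.
elim: N k => [|N IH] k.
  rewrite leqn0 => /eqP -> HQ; exists 0%N; split=> //; split=> //.
move=> Hk HQ; case: (classic (Q N.+1)) => HN.
  by exists N.+1; split=> //; split=> // j.
have Hk' : (k <= N)%N.
  move: Hk; rewrite leq_eqVlt => /orP [/eqP Ek|//].
  by move: HQ; rewrite Ek.
have [J [HJ [QJ HJm]]] := IH k Hk' HQ.
exists J; split; first by apply: leq_trans HJ _.
split=> // j; rewrite leq_eqVlt => /orP [/eqP -> //|]; rewrite ltnS => Hj Qj.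
by apply: HJm.
Qed.

Fixpoint Svs (R : realFieldType) (n m : nat) (A : 'M[R]_n) (C : 'M[R]_(m, n)) (k : nat)
  : {vspace 'cV[R]_n} :=
  match k with
  | 0%N => lker (linfun (mulmx C))
  | k'.+1 => ((linfun (mulmx A) @: @Svs R n m A C k') :&: lker (linfun (mulmx C)))%VS
  end.
Arguments Svs {R n m}.

Lemma Svs_Sk (R : realFieldType) (n m : nat) (A : 'M[R]_n) (C : 'M[R]_(m, n)) k x :
  Sk A C k x <-> x \in Svs A C k.
Proof.
elim: k x => [|k IH] x /=.
  by rewrite memv_ker lfunE /=; split => [->//|/eqP].
rewrite memv_cap memv_ker lfunE /=; split.
  case=> [[s [Hs ->]] HC]; rewrite HC eqxx andbT.
  by apply/memv_imgP; exists s; [apply/IH|rewrite lfunE].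
case/andP=> /memv_imgP [s Hs ->] /eqP HC; split.
  by exists s; split; [apply/IH|rewrite lfunE].
by move: HC; rewrite lfunE.
Qed.

Lemma Svs_sub (R : realFieldType) (n m : nat) (A : 'M[R]_n) (C : 'M[R]_(m, n)) k :
  (Svs A C k.+1 <= Svs A C k)%VS.
Proof.
elim: k => [|k IH]; first exact: capvSr.
by apply: capvS => //; apply: limgS.
Qed.

Lemma Svs_stab (R : realFieldType) (n m : nat) (A : 'M[R]_n) (C : 'M[R]_(m, n)) k :
  Svs A C k.+1 = Svs A C k -> Svs A C k.+2 = Svs A C k.+1.
Proof.
move=> E.
have -> : Svs A C k.+2 = ((linfun (mulmx A) @: Svs A C k.+1) :&: lker (linfun (mulmx C)))%VS by [].
by rewrite E.
Qed.

Lemma Svs_dim (R : realFieldType) (n m : nat) (A : 'M[R]_n) (C : 'M[R]_(m, n)) k :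
  (\dim (Svs A C k) + k <= n)%N \/ Svs A C k.+1 = Svs A C k.
Proof.
elim: k => [|k [IH|IH]].
  left; rewrite addn0; apply: leq_trans (dimvS (subvf _)) _.
  by rewrite dimvf dim_matrix mulr1.
- case: (classic (Svs A C k.+1 = Svs A C k)) => E; [right; exact: Svs_stab|left].
  have : (\dim (Svs A C k.+1) < \dim (Svs A C k))%N.
    rewrite ltnNge; apply/negP => Hd; apply: E; apply/eqP.
    by rewrite eqEdim Svs_sub.
  by move=> Hlt; rewrite addnS; apply: leq_trans IH; rewrite ltn_add2r.
- by right; apply: Svs_stab.
Qed.

Lemma Svs_const (R : realFieldType) (n m : nat) (A : 'M[R]_n) (C : 'M[R]_(m, n)) k j :
  Svs A C k.+1 = Svs A C k -> Svs A C (k + j) = Svs A C k.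
Proof.
move=> E; elim: j => [|j IH]; first by rewrite addn0.
rewrite addnS -IH; elim: j {IH} => [|j IHj]; first by rewrite addn0 E.
by rewrite addnS; apply: Svs_stab.
Qed.

Lemma Sk_traj (R : realFieldType) (n m : nat) (A : 'M[R]_n) (C : 'M[R]_(m, n)) k x :
  Sk A C k x -> exists s, x = sol (fun v => A *m v) k s /\
    forall j, (j <= k)%N -> C *m sol (fun v => A *m v) j s = 0.
Proof.
elim: k x => [|k IH] x /=.
  by move=> HC; exists x; split=> // j; rewrite leqn0 => /eqP ->.
case=> [[s' [Hs' ->]] HC]; have [s [Es Hj]] := IH _ Hs'.
exists s; split; first by rewrite Es.
move=> j; rewrite leq_eqVlt => /orP [/eqP -> /=|]; first by rewrite -Es.
by rewrite ltnS; apply: Hj.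
Qed.

Lemma sol0 (R : realFieldType) (n : nat) (A : 'M[R]_n) k :
  sol (fun v : 'cV[R]_n => A *m v) k 0 = 0.
Proof. by elim: k => [//|k IH] /=; rewrite IH mulmx0. Qed.

Fixpoint run (X Y : Type) (gs : X -> Y -> X) (x0 : X) (u : nat -> Y) (k : nat) : X :=
  match k with 0%N => x0 | k'.+1 => gs (run gs x0 u k') (u k') end.

Lemma run_ext (X Y : Type) (gs : X -> Y -> X) (x0 : X) (u u' : nat -> Y) K :
  (forall j, (j < K)%N -> u j = u' j) -> run gs x0 u K = run gs x0 u' K.
Proof.
elim: K => [//|K IH] H /=; rewrite IH ?H //.
by move=> j Hj; apply: H; apply: ltnW.
Qed.

Unset Implicit Arguments.

Theorem lemma1 (R : realFieldType) (n m : nat) (A : 'M[R]_n) (C : 'M[R]_(m, n)) :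
  deadbeat_observable (fun x : 'cV[R]_n => A *m x) (fun x : 'cV[R]_n => C *m x)
  <-> (forall x : 'cV[R]_n, Sk A C n x <-> x = 0).
Proof.
split.
- case=> g [Hne [p [Hp H]]] x; split; last by move=> ->; apply: Sk_0.
  move=> Hx.
  pose gs xh y := proj1_sig (constructive_indefinite_description _ (Hne xh y)).
  have Hgs xh y : g xh y (gs xh y).
    by rewrite /gs; case: constructive_indefinite_description.
  have Hsol z : is_obs_solution (fun x : 'cV[R]_n => A *m x)
      (fun x : 'cV[R]_n => C *m x) g 0 z
      (run gs 0 (fun j => C *m sol (fun v => A *m v) j z)).
    by split=> // k; apply: Hgs.
  have HxK : Sk A C (n + p) x.
    have [Hd|Hst] := @Svs_dim R n m A C n.
      have : Svs A C n = 0%VS.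
        apply/eqP; rewrite -dimv_eq0 -leqn0.
        by rewrite -(leq_add2r n) add0n.
      move/Svs_Sk: Hx => Hx E; move: Hx; rewrite E memv0 => /eqP ->.
      exact: Sk_0.
    by apply/Svs_Sk; rewrite Svs_const //; apply/Svs_Sk.
  have [s [Es Hj]] := @Sk_traj R n m A C _ _ HxK.
  have Hle : (p <= n + p)%N by rewrite leq_addl.
  have E1 := H s 0 _ (Hsol s) _ Hle.
  have E2 := H 0 0 _ (Hsol 0) _ Hle.
  rewrite Es -E1 (run_ext gs 0 _ (fun j => C *m sol (fun v : 'cV[R]_n => A *m v) j 0)) .
    by rewrite E2 sol0.
  by move=> j Hjk; rewrite sol0 mulmx0 Hj // ltnW.
- move=> HS.
  pose cond (xh : 'cV[R]_n) (y : 'cV[R]_m) w := C *m w = y /\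
    forall j, (j <= n)%N -> (exists t, Tk A C j t /\ C *m t = y - C *m xh) ->
      Tk A C j (w - xh).
  pose g xh y z := (exists w, cond xh y w) -> exists w, cond xh y w /\ z = A *m w.
  exists g; split.
    move=> xh y; case: (classic (exists w, cond xh y w)) => [[w Hw]|Hn].
      by exists (A *m w) => _; exists w.
    by exists 0 => Hw.
  have Hex : forall xh y k, (k <= n)%N ->
      (exists t, Tk A C k t /\ C *m t = y - C *m xh) -> exists w, cond xh y w.
    move=> xh y k Hk HQ.
    have [J [HJ [[t [Ht Ct]] HJm]]] := @max_ex (fun j => exists t, Tk A C j t /\ C *m t = y - C *m xh) _ _ Hk HQ.
    exists (xh + t); split; first by rewrite mulmxDr Ct addrC subrK.
    move=> j Hjn Qj; have -> : xh + t - xh = t by rewrite addrC addKr.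
    by apply: (@Tk_mono R n m A C j J t (HJm j Hjn Qj)).
  have Hstep : forall (x : 'cV[R]_n) psi k k', (k' <= n)%N ->
      is_obs_solution (fun x : 'cV[R]_n => A *m x) (fun x : 'cV[R]_n => C *m x)
        g (psi 0%N) x psi ->
      Tk A C k' (psi k - sol (fun v => A *m v) k x) ->
      exists d, Sk A C k' d /\
        psi k.+1 - sol (fun v => A *m v) k.+1 x = A *m d.
    move=> x psi k k' Hk' [_ Hg] HT.
    set phi := sol (fun v => A *m v) k x in HT *.
    have Hq : exists t, Tk A C k' t /\ C *m t = C *m phi - C *m psi k.
      exists (- (psi k - phi)); split; first exact: Tk_opp.
      by rewrite mulmxN mulmxBr opprB.
    have [w [[Cw Hw] Epsi]] := Hg k (Hex _ _ _ Hk' Hq).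
    have Hw' := Hw k' Hk' Hq.
    exists (w - phi); split.
      apply: Tk_Sk; last by rewrite mulmxBr Cw subrr.
      have -> : w - phi = (w - psi k) + (psi k - phi) by rewrite addrA subrK.
      exact: Tk_add.
    by rewrite Epsi /= -/phi mulmxBr.
  exists n.+1; split=> // x xh psi Hs.
  have Hpsi0 : psi 0%N = xh by case: Hs.
  rewrite -Hpsi0 in Hs.
  have Inv : forall k, Tk A C (minn k n) (psi k - sol (fun v => A *m v) k x).
    elim=> [|k IH]; first by rewrite min0n.
    have [d [Hd Ed]] := Hstep x psi k (minn k n) (geq_minr _ _) Hs IH.
    rewrite Ed; case: (leqP n k) => Hkn.
      have -> : minn k.+1 n = n by apply/minn_idPr; apply: leq_trans Hkn _.
      move: Hd; rewrite (minn_idPr Hkn) => /HS ->; rewrite mulmx0.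
      exact: (@Tk_0 R n m A C n).
    rewrite (minn_idPl Hkn) /=.
    by exists d; split; [move: Hd; rewrite (minn_idPl (ltnW Hkn))|].
  case=> [//|k] Hk.
  have Hkn : (n <= k)%N by [].
  have [d [Hd Ed]] := Hstep x psi k n (leqnn n) Hs
    (eq_ind _ (fun j => Tk A C j _) (Inv k) _ (minn_idPr Hkn)).
  by move/HS: Hd => Hd; move/eqP: Ed; rewrite Hd mulmx0 subr_eq0 => /eqP.
Qed.
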